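(* Let $P(\vec\alpha,\vec\beta,\vec\xi)\in\mathcal{P}$ be a syntactically compositional predicate and $P'(\vec\alpha,\vec\xi)\in\mathcal{P}$ a predicate which is a completion of $P$ with respect to a pair of constants $\vec c=(c_1,c_2)$. Then $P'(\vec\alpha,\vec\xi)\Leftrightarrow P(\vec\alpha,\vec c,\vec\xi)$ holds, and the entailment $\exists\vec\beta.\ P(\vec\alpha,\vec\beta,\vec\xi)\ast P'(\vec\beta,\vec\xi)\Rightarrow P'(\vec\alpha,\vec\xi)$ holds.
   Context: Separation logic setting: location variables (interpreted in a set $\mathbb{L}$ of locations, with a constant ${\sf nil}$) and data variables; pointer fields $\mathcal{F}$ and data fields $\mathcal{D}$. A state is $(s,h)$ with $s$ a stack assigning values to variables and $h$ a finite partial heap mapping (location, field) pairs to locations or data values. Formulas: pure parts (location (dis)equalities and data constraints in a decidable theory), spatial parts $\mathtt{emp}$, $E\mapsto\rho$, predicate atoms, $\ast$ (separating conjunction over domain-disjoint heaps), with $\land,\lor,\exists$. Predicates are defined by finite sets of rules $Q(E,\vec F)::=\exists\vec Z.\Pi\land\Sigma$ with least-fixed-point semantics; an entailment $A\Rightarrow B$ means every $(s,h)$ satisfying $A$ satisfies $B$; $\Leftrightarrow$ means entailment in both directions. Syntactic compositionality: $P$ has parameters $(\vec\alpha,\vec\beta,\vec\xi)$, $\vec\alpha=(E,C)$ (source), $\vec\beta=(F,H)$ (hole), $E,F$ location variables, $C,H$ data variables, $\vec\xi$ static parameters. $P$ is syntactically compositional if it has exactly one base rule $P(\vec\alpha,\vec\beta,\vec\xi)::=\alpha_1=\beta_1\land\alpha_2=\beta_2\land\mathtt{emp}$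 and at least one inductive rule, every inductive rule being of the form $P(\vec\alpha,\vec\beta,\vec\xi)::=\exists\vec Z.\ \Pi\land\Sigma_1\ast\Sigma_2\ast P(\vec\gamma,\vec\beta,\vec\xi)$ where $\Sigma_1$ is a nonempty separating conjunction of points-to atoms containing a unique points-to atom from $E$ and all location variables of $\vec Z$, whose Gaifman graph is a connected DAG rooted at $E$; $\Sigma_2$ is a possibly empty separating conjunction of predicate atoms whose first arguments are sink vertices of that graph; $\vec\gamma$ consists of variables of $\vec Z$; and the variables of $\vec\beta$ do not occur in $\Pi,\Sigma_1,\Sigma_2,\vec\gamma$. Completion: $P'$ with parameters $(\vec\alpha,\vec\xi)$ is a completion of $P$ with respect to $\vec c=(c_1,c_2)$ if its rules are obtained from those of $P$ by the substitution $\beta_1\mapsto c_1,\beta_2\mapsto c_2$: its only base rule is $P'(\vec\alpha,\vec\xi)::=\alpha_1=c_1\land\alpha_2=c_2\land\mathtt{emp}$, and for each inductive rule $P(\vec\alpha,\vec\beta,\vec\xi)::=\exists\vec Z.\ \Pi\land\Sigma_1\ast\Sigma_2\ast P(\vec\gamma,\vec\beta,\vec\xi)$ of $P$, $P'$ has the inductive rule $P'(\vec\alpha,\vec\xi)::=\exists\vec Z.\ \Pi\land\Sigma_1\ast\Sigma_2\ast P'(\vec\gamma,\vec\xi)$ (and these are all its rules). *)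

(* Defs.v *)
From Stdlib Require Import List Relations Permutation.
Import ListNotations.
Set Implicit Arguments.

Section SL.

Variables (L Dat : Type) (lnil : L).

Inductive var := LV (n : nat) | DV (n : nat).

Inductive term := TVar (x : var) | TNil | TDat (d : Dat).

Inductive Val := VL (l : L) | VD (d : Dat).

Definition fld := nat.

(** Pure atoms: (dis)equalities and atomic constraints of an arbitrary data
    theory (a relation applied to a list of terms). *)
Inductive patom :=
| PEq (t1 t2 : term)
| PNeq (t1 t2 : term)
| PRel (r : list Val -> Prop) (ts : list term).

Inductive satom :=
| PointsTo (x : term) (rho : list (fld * term))
| PredAt (p : nat) (args : list term).

(** A rule body [exists Z. Pi /\ Sigma]; the quantified variables [Z] are
    all the variables of the rule which are not formal parameters. *)
Record rule := mkRule { rpure : list patom; rspat : list satom }.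

Record pdef := mkPdef { params : list var; rules : list rule }.

Definition sid := nat -> pdef.

Record stack := mkStack { sl : nat -> L; sd : nat -> Dat }.
Definition heap := (L * fld)%type -> option Val.

Definition eval_var (s : stack) (x : var) : Val :=
  match x with LV n => VL (sl s n) | DV n => VD (sd s n) end.

Definition eval (s : stack) (t : term) : Val :=
  match t with TVar x => eval_var s x | TNil => VL lnil | TDat d => VD d end.

Definition hempty (h : heap) : Prop := forall k, h k = None.
Definition hdisj (h1 h2 : heap) : Prop := forall k, h1 k = None \/ h2 k = None.
Definition hunion (h h1 h2 : heap) : Prop :=
  forall k, h k = match h1 k with Some v => Some v | None => h2 k end.
Definition hfinite (h : heap) : Prop :=
  exists ks : list (L * fld), forall k, h k <> None -> In k ks.

Definition pts_heap (l : L) (vals : list (fld * Val)) (h : heap) : Prop :=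
  forall l' f v, h (l', f) = Some v <-> (l' = l /\ In (f, v) vals).

Definition psat_atom (s : stack) (a : patom) : Prop :=
  match a with
  | PEq t1 t2 => eval s t1 = eval s t2
  | PNeq t1 t2 => eval s t1 <> eval s t2
  | PRel r ts => r (map (eval s) ts)
  end.

Inductive psat (D : sid) : nat -> list Val -> heap -> Prop :=
| psat_rule p vals h r s :
    In r (rules (D p)) ->
    map (eval_var s) (params (D p)) = vals ->
    Forall (psat_atom s) (rpure r) ->
    ssat D s (rspat r) h ->
    psat D p vals h
with ssat (D : sid) : stack -> list satom -> heap -> Prop :=
| ssat_nil s h : hempty h -> ssat D s [] h
| ssat_pt s x rho rest l h1 h2 h :
    eval s x = VL l -> l <> lnil ->
    pts_heap l (map (fun ft => (fst ft, eval s (snd ft))) rho) h1 ->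
    ssat D s rest h2 -> hdisj h1 h2 -> hunion h h1 h2 ->
    ssat D s (PointsTo x rho :: rest) h
| ssat_pred s q args rest h1 h2 h :
    psat D q (map (eval s) args) h1 ->
    ssat D s rest h2 -> hdisj h1 h2 -> hunion h h1 h2 ->
    ssat D s (PredAt q args :: rest) h.

Inductive form :=
| FPure (a : patom)
| FEmp
| FPt (x : term) (rho : list (fld * term))
| FPred (p : nat) (args : list term)
| FStar (A B : form)
| FAnd (A B : form)
| FOr (A B : form)
| FEx (x : var) (A : form).

Definition upd_l (s : stack) (n : nat) (l : L) : stack :=
  mkStack (fun m => if Nat.eqb m n then l else sl s m) (sd s).
Definition upd_d (s : stack) (n : nat) (d : Dat) : stack :=
  mkStack (sl s) (fun m => if Nat.eqb m n then d else sd s m).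

Fixpoint sat (D : sid) (s : stack) (h : heap) (A : form) : Prop :=
  match A with
  | FPure a => psat_atom s a
  | FEmp => hempty h
  | FPt x rho => exists l, eval s x = VL l /\ l <> lnil /\
      pts_heap l (map (fun ft => (fst ft, eval s (snd ft))) rho) h
  | FPred p args => psat D p (map (eval s) args) h
  | FStar A B => exists h1 h2, hdisj h1 h2 /\ hunion h h1 h2 /\
      sat D s h1 A /\ sat D s h2 B
  | FAnd A B => sat D s h A /\ sat D s h B
  | FOr A B => sat D s h A \/ sat D s h B
  | FEx (LV n) A => exists l, sat D (upd_l s n l) h A
  | FEx (DV n) A => exists d, sat D (upd_d s n d) h A
  end.

Definition entails (D : sid) (A B : form) : Prop :=
  forall s h, hfinite h -> sat D s h A -> sat D s h B.
Definition equiv (D : sid) (A B : form) : Prop := entails D A B /\ entails D B A.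

Definition vars_term (t : term) : list var :=
  match t with TVar x => [x] | _ => [] end.
Definition vars_patom (a : patom) : list var :=
  match a with
  | PEq t1 t2 | PNeq t1 t2 => vars_term t1 ++ vars_term t2
  | PRel _ ts => flat_map vars_term ts
  end.
Definition terms_satom (a : satom) : list term :=
  match a with
  | PointsTo x rho => x :: map snd rho
  | PredAt _ args => args
  end.
Definition vars_satom (a : satom) : list var := flat_map vars_term (terms_satom a).
Definition vars_rule (r : rule) : list var :=
  flat_map vars_patom (rpure r) ++ flat_map vars_satom (rspat r).

Definition gvert (S : list satom) (x : nat) : Prop :=
  exists a, In a S /\ In (LV x) (vars_satom a).
Definition gedge (S : list satom) (x y : nat) : Prop :=
  exists rho, In (PointsTo (TVar (LV x)) rho) S /\ In (TVar (LV y)) (map snd rho).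
Definition gsink (S : list satom) (x : nat) : Prop :=
  gvert S x /\ forall y, ~ gedge S x y.
Definition is_pt (a : satom) : Prop :=
  match a with PointsTo _ _ => True | _ => False end.

(** The conditions on an inductive rule [exists Z. Pi /\ S1 * S2 * P(g, beta, xi)]. *)
Definition comp_inductive_rule (P e c f h : nat) (xi : list var) (r : rule) : Prop :=
  let ps := [LV e; DV c; LV f; DV h] ++ xi in
  exists (S1 S2 : list satom) (g1 g2 : nat),
    Permutation (rspat r)
      (S1 ++ S2 ++ [PredAt P ([TVar (LV g1); TVar (DV g2); TVar (LV f); TVar (DV h)]
                              ++ map TVar xi)]) /\
    S1 <> [] /\ Forall is_pt S1 /\
    (exists l1 rho l2, S1 = l1 ++ PointsTo (TVar (LV e)) rho :: l2 /\
       forall rho', ~ In (PointsTo (TVar (LV e)) rho') (l1 ++ l2)) /\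
    (forall z, In (LV z) (vars_rule r) -> ~ In (LV z) ps -> gvert S1 z) /\
    (forall x, gvert S1 x -> clos_refl_trans nat (gedge S1) e x) /\
    (forall x, ~ clos_trans nat (gedge S1) x x) /\
    Forall (fun a => exists q x args, a = PredAt q (TVar (LV x) :: args) /\ gsink S1 x) S2 /\
    ~ In (LV g1) ps /\ ~ In (DV g2) ps /\
    (* beta does not occur in Pi, S1, S2 (nor in gamma, by the above) *)
    ~ In (LV f) (flat_map vars_patom (rpure r)) /\
    ~ In (DV h) (flat_map vars_patom (rpure r)) /\
    ~ In (LV f) (flat_map vars_satom (S1 ++ S2)) /\
    ~ In (DV h) (flat_map vars_satom (S1 ++ S2)).

Definition base_rule (e c f h : nat) : rule :=
  mkRule [PEq (TVar (LV e)) (TVar (LV f)); PEq (TVar (DV c)) (TVar (DV h))] [].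

Definition compositional (D : sid) (P : nat) : Prop :=
  exists e c f h xi,
    params (D P) = [LV e; DV c; LV f; DV h] ++ xi /\
    NoDup (params (D P)) /\
    exists l1 l2, rules (D P) = l1 ++ base_rule e c f h :: l2 /\
      l1 ++ l2 <> [] /\
      Forall (comp_inductive_rule P e c f h xi) (l1 ++ l2).

Definition completion (D : sid) (P P' : nat) (c1 c2 : term) : Prop :=
  exists e c f h xi,
    params (D P) = [LV e; DV c; LV f; DV h] ++ xi /\
    params (D P') = [LV e; DV c] ++ xi /\
    forall r', In r' (rules (D P')) <->
      (r' = mkRule [PEq (TVar (LV e)) c1; PEq (TVar (DV c)) c2] [] \/
       exists pi l1 l2 g1 g2,
         In (mkRule pi (l1 ++ PredAt P ([TVar (LV g1); TVar (DV g2); TVar (LV f); TVar (DV h)]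
                                         ++ map TVar xi) :: l2)) (rules (D P)) /\
         r' = mkRule pi (l1 ++ PredAt P' ([TVar (LV g1); TVar (DV g2)] ++ map TVar xi) :: l2)).

End SL.


Arguments TVar {Dat}.
Arguments TNil {Dat}.
Arguments PEq {L Dat}.
Arguments PNeq {L Dat}.
Arguments PRel {L Dat}.
Arguments FPure {L Dat}.
Arguments FEmp {L Dat}.
Arguments FPt {L Dat}.
Arguments FPred {L Dat}.

(* Main.v *)
Require Import Defs.
From Stdlib Require Import List Permutation FunctionalExtensionality Arith.
Import ListNotations.

Scheme psat_mut := Induction for psat Sort Prop
with ssat_mut := Induction for ssat Sort Prop.

Section G.
Variables (L Dat : Type) (lnil : L) (D : sid L Dat).
Notation heapT := (heap L Dat).
Notation stk := (stack L Dat).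

Definition hu (h1 h2 : heapT) : heapT :=
  fun k => match h1 k with Some v => Some v | None => h2 k end.

Ltac hsolve :=
  unfold hdisj, hunion, hu in *; repeat split;
  let k := fresh "k" in intro k;
  repeat match goal with H : forall k : (L * fld)%type, _ |- _ => pose proof (H k); clear H end;
  repeat match goal with |- context [?f k] => destruct (f k) end;
  repeat match goal with H : context [?f k] |- _ => destruct (f k) end;
  intuition congruence.

Lemma heap_split1 (h h1 h2 ha hr : heapT) :
  hdisj h1 h2 -> hunion h h1 h2 -> hdisj ha hr -> hunion h2 ha hr ->
  hdisj ha (hu h1 hr) /\ hunion h ha (hu h1 hr) /\ hdisj h1 hr /\ hunion (hu h1 hr) h1 hr.
Proof. intros. hsolve. Qed.

Lemma heap_split2 (h hr h1 h2 ha : heapT) :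
  hdisj h1 h2 -> hunion hr h1 h2 -> hdisj ha hr -> hunion h ha hr ->
  hdisj ha h2 /\ hunion (hu ha h2) ha h2 /\ hdisj h1 (hu ha h2) /\ hunion h h1 (hu ha h2).
Proof. intros. hsolve. Qed.

Definition decomp (s : stk) S (h : heapT) (G : nat -> list (Val L Dat) -> heapT -> Prop) :=
  forall l1 q a l2, S = l1 ++ PredAt q a :: l2 ->
   exists ha hr, hdisj ha hr /\ hunion h ha hr /\ psat lnil D q (map (eval lnil s) a) ha /\
     G q (map (eval lnil s) a) ha /\ ssat lnil D s (l1 ++ l2) hr.

Lemma psat_strong G :
  (forall p vals h r s, In r (rules (D p)) -> map (eval_var s) (params (D p)) = vals ->
     Forall (psat_atom lnil s) (rpure r) -> ssat lnil D s (rspat r) h ->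
     decomp s (rspat r) h G -> G p vals h) ->
  forall p vals h, psat lnil D p vals h -> G p vals h.
Proof.
  intros Hstep.
  apply (psat_mut L Dat lnil D (fun p vals h _ => G p vals h) (fun s S h _ => decomp s S h G)).
  - intros. eapply Hstep; eauto.
  - intros s h He l1 q a l2 E. destruct l1; discriminate.
  - intros s x rho rest l h1 h2 h Hx Hl Hpts Hrest IH Hd Hu l1 q a l2 E.
    destruct l1 as [|b l1']; [discriminate|]. injection E as Eb E'; subst b.
    destruct (IH l1' q a l2 E') as (ha&hr&Hd'&Hu'&Hp&HG&Hs).
    destruct (heap_split1 _ _ _ _ _ Hd Hu Hd' Hu') as (A1&A2&A3&A4).
    exists ha, (hu h1 hr). repeat split; auto.
    simpl. eapply ssat_pt; eauto.
  - intros s q args rest h1 h2 h Hp IHp Hrest IH Hd Hu l1 q' a l2 E.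
    destruct l1 as [|b l1'].
    + injection E as -> -> ->. exists h1, h2. repeat split; auto.
    + injection E as Eb E'; subst b.
      destruct (IH l1' q' a l2 E') as (ha&hr&Hd'&Hu'&Hp'&HG&Hs).
      destruct (heap_split1 _ _ _ _ _ Hd Hu Hd' Hu') as (A1&A2&A3&A4).
      exists ha, (hu h1 hr). repeat split; auto.
      simpl. eapply ssat_pred; eauto.
Qed.

Lemma ssat_insert s l1 q a l2 : forall hr ha h,
  ssat lnil D s (l1 ++ l2) hr -> psat lnil D q (map (eval lnil s) a) ha ->
  hdisj ha hr -> hunion h ha hr -> ssat lnil D s (l1 ++ PredAt q a :: l2) h.
Proof.
  induction l1 as [|b l1 IH]; intros hr ha h Hs Hp Hd Hu.
  - simpl. eapply ssat_pred; eauto.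
  - simpl in *. inversion Hs; subst.
    + match goal with H1 : hdisj _ _, H2 : hunion hr _ _ |- _ => destruct (heap_split2 _ _ _ _ _ H1 H2 Hd Hu) as (A1&A2&A3&A4) end.
      eapply ssat_pt; eauto.
    + match goal with H1 : hdisj _ _, H2 : hunion hr _ _ |- _ => destruct (heap_split2 _ _ _ _ _ H1 H2 Hd Hu) as (A1&A2&A3&A4) end.
      eapply ssat_pred; eauto.
Qed.

Lemma eval_agree (s s' : stk) t :
  (forall x, In x (vars_term t) -> eval_var s x = eval_var s' x) -> eval lnil s t = eval lnil s' t.
Proof. destruct t; simpl; auto. Qed.

Lemma map_eval_agree (s s' : stk) (ts : list (term Dat)) :
  (forall x, In x (flat_map (@vars_term Dat) ts) -> eval_var s x = eval_var s' x) ->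
  map (eval lnil s) ts = map (eval lnil s') ts.
Proof.
  intros H. apply map_ext_in. intros t Ht. apply eval_agree.
  intros x Hx. apply H. apply in_flat_map. eauto.
Qed.

Lemma patom_agree (s s' : stk) a :
  (forall x, In x (vars_patom a) -> eval_var s x = eval_var s' x) ->
  psat_atom lnil s a -> psat_atom lnil s' a.
Proof.
  intros H. destruct a; simpl in *.
  - rewrite !(eval_agree s s'); auto; intros; apply H; apply in_or_app; auto.
  - rewrite !(eval_agree s s'); auto; intros; apply H; apply in_or_app; auto.
  - rewrite (map_eval_agree s s'); auto.
Qed.

Lemma pure_agree (s s' : stk) (pi : list (patom L Dat)) :
  (forall x, In x (flat_map (@vars_patom L Dat) pi) -> eval_var s x = eval_var s' x) ->
  Forall (psat_atom lnil s) pi -> Forall (psat_atom lnil s') pi.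
Proof.
  intros H HF. rewrite Forall_forall in *. intros a Ha.
  apply (patom_agree s); auto. intros x Hx. apply H. apply in_flat_map; eauto.
Qed.

Lemma ssat_agree s S h : ssat lnil D s S h -> forall s',
  (forall x, In x (flat_map (@vars_satom Dat) S) -> eval_var s x = eval_var s' x) ->
  ssat lnil D s' S h.
Proof.
  induction 1; intros s' Ha.
  - constructor; auto.
  - simpl in Ha. eapply ssat_pt.
    + rewrite <- (eval_agree s s'); eauto. intros; apply Ha. unfold vars_satom; simpl.
      apply in_or_app; left; apply in_or_app; auto.
    + eauto.
    + erewrite map_ext_in; [eassumption|]. intros ft Hft. simpl. f_equal.
      symmetry; apply eval_agree. intros y Hy. apply Ha. unfold vars_satom; simpl.
      apply in_or_app; left; apply in_or_app; right. apply in_flat_map.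
      exists (snd ft). split; auto. apply in_map; auto.
    + apply IHssat. intros; apply Ha; apply in_or_app; auto.
    + eauto.
    + eauto.
  - simpl in Ha. eapply ssat_pred.
    + rewrite <- (map_eval_agree s s'); eauto. intros; apply Ha. apply in_or_app; auto.
    + apply IHssat. intros; apply Ha; apply in_or_app; auto.
    + eauto.
    + eauto.
Qed.

Lemma heap_split3 (hp ha hr hx hh : heapT) :
  hdisj ha hr -> hunion hp ha hr -> hdisj hp hx -> hunion hh hp hx ->
  hdisj ha hx /\ hunion (hu ha hx) ha hx /\ hdisj (hu ha hx) hr /\ hunion hh (hu ha hx) hr.
Proof. intros. hsolve. Qed.

Lemma heap_empty_eq (hh hp hx : heapT) : hempty hp -> hunion hh hp hx -> hh = hx.
Proof.
  intros H1 H2. apply functional_extensionality. intro k. rewrite H2, H1. reflexivity.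
Qed.

Lemma upd_ld_other (s : stk) n l m dd x : x <> LV n -> x <> DV m ->
  eval_var (upd_l (upd_d s m dd) n l) x = eval_var s x.
Proof.
  destruct x as [k|k]; simpl; intros H1 H2; f_equal.
  - destruct (Nat.eqb_spec k n); congruence.
  - destruct (Nat.eqb_spec k m); congruence.
Qed.

Lemma upd_dl_other (s : stk) n l m dd x : x <> LV n -> x <> DV m ->
  eval_var (upd_d (upd_l s n l) m dd) x = eval_var s x.
Proof.
  destruct x as [k|k]; simpl; intros H1 H2; f_equal.
  - destruct (Nat.eqb_spec k n); congruence.
  - destruct (Nat.eqb_spec k m); congruence.
Qed.

Lemma map_eval_TVar (s : stk) xs : map (eval lnil s) (map TVar xs) = map (eval_var s) xs.
Proof. rewrite map_map. reflexivity. Qed.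

Lemma map_ld_other (s : stk) n l m dd xs : ~ In (LV n) xs -> ~ In (DV m) xs ->
  map (eval_var (upd_l (upd_d s m dd) n l)) xs = map (eval_var s) xs.
Proof.
  intros H1 H2. apply map_ext_in. intros x Hx. apply upd_ld_other; intro; subst; auto.
Qed.

Lemma map_dl_other (s : stk) n l m dd xs : ~ In (LV n) xs -> ~ In (DV m) xs ->
  map (eval_var (upd_d (upd_l s n l) m dd)) xs = map (eval_var s) xs.
Proof.
  intros H1 H2. apply map_ext_in. intros x Hx. apply upd_dl_other; intro; subst; auto.
Qed.

End G.

Theorem theorem2 (L Dat : Type) (lnil : L) (D : sid L Dat) (P P' : nat) (d : Dat)
  (e c f h : nat) (xi : list var) :
  compositional D P ->
  params (D P) = [LV e; DV c; LV f; DV h] ++ xi ->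
  completion D P P' TNil (TDat d) ->
  equiv lnil D (FPred P' (map TVar ([LV e; DV c] ++ xi)))
              (FPred P ([TVar (LV e); TVar (DV c); TNil; TDat d] ++ map TVar xi)) /\
  entails lnil D
    (FEx (LV f) (FEx (DV h)
       (FStar (FPred P (map TVar ([LV e; DV c; LV f; DV h] ++ xi)))
              (FPred P' (map TVar ([LV f; DV h] ++ xi))))))
    (FPred P' (map TVar ([LV e; DV c] ++ xi))).
Proof.
  intros Hcomp Hpar Hcompl.
  destruct Hcomp as (e0&c0&f0&h0&xi0&Hpar0&Hnd&l1P&l2P&Hrules&Hne&HF).
  rewrite Hpar in Hpar0. injection Hpar0 as <- <- <- <- <-.
  destruct Hcompl as (e1&c1&f1&h1&xi1&HparP&HparP'&Hiff).
  rewrite Hpar in HparP. injection HparP as <- <- <- <- <-.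
  rewrite Hpar in Hnd. simpl in Hnd.
  inversion Hnd as [|? ? Hn1 Hnd1]; subst.
  inversion Hnd1 as [|? ? Hn2 Hnd2]; subst.
  inversion Hnd2 as [|? ? Hn3 Hnd3]; subst.
  inversion Hnd3 as [|? ? Hn4 Hnd4]; subst.
  assert (Hef : e <> f) by (intro; subst; apply Hn1; simpl; auto).
  assert (Hch : c <> h) by (intro; subst; apply Hn2; simpl; auto).
  assert (Hfxi : ~ In (LV f) xi) by (intro; apply Hn3; simpl; auto).
  assert (Hhxi : ~ In (DV h) xi) by exact Hn4.
  assert (Hexi : ~ In (LV e) xi) by (intro; apply Hn1; simpl; auto).
  assert (Hcxi : ~ In (DV c) xi) by (intro; apply Hn2; simpl; auto).
  assert (HP : forall r, In r (rules (D P)) -> r = base_rule L Dat e c f h \/ comp_inductive_rule P e c f h xi r).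
  { intros r Hr. rewrite Hrules in Hr. apply in_app_or in Hr. destruct Hr as [Hr|[Hr|Hr]].
    - right. rewrite Forall_forall in HF. apply HF. apply in_or_app; auto.
    - left; auto.
    - right. rewrite Forall_forall in HF. apply HF. apply in_or_app; auto. }
  assert (HbaseP : In (base_rule L Dat e c f h) (rules (D P))).
  { rewrite Hrules. apply in_or_app. right. left. reflexivity. }
  pose (G3d := fun q vals hp => q = P ->
    forall le dc lf dh vx, vals = [VL Dat le; VD L dc; VL Dat lf; VD L dh] ++ vx ->
    forall hx hh, psat lnil D P' ([VL Dat lf; VD L dh] ++ vx) hx -> hdisj hp hx ->
    hunion hh hp hx -> psat lnil D P' ([VL Dat le; VD L dc] ++ vx) hh).
  assert (G3 : forall q vals hp, psat lnil D q vals hp -> G3d q vals hp).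
  { apply (@psat_strong L Dat lnil D G3d).
    intros p vals hp r s Hin Hps Hpure Hss Hdec; unfold G3d in Hdec |- *; intros -> le dc lf dh vx Hvals hx hh Hx Hd Hu.
    rewrite Hpar, Hvals in Hps. simpl in Hps.
    injection Hps as Hle Hdc Hlf Hdh Hvx.
    destruct (HP r Hin) as [Hr | Hr].
    - subst r. simpl in Hpure. inversion Hpure as [|? ? Ha1 Hpure1]; subst.
      inversion Hpure1 as [|? ? Ha2 _]; subst. simpl in Ha1, Ha2.
      injection Ha1 as Ha1. injection Ha2 as Ha2.
      simpl in Hss. inversion Hss; subst.
      rewrite (heap_empty_eq _ _ _ _ _ H Hu). rewrite Ha1, Ha2. exact Hx.
    - destruct Hr as (S1&S2&g1&g2&Hperm&_&_&_&_&_&_&_&Hg1&Hg2&Hfpi&Hhpi&HfS&HhS).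
      set (A := PredAt P ([TVar (LV g1); TVar (DV g2); TVar (LV f); TVar (DV h)] ++ map TVar xi)) in *.
      assert (HA : In A (rspat r)).
      { apply (Permutation_in _ (Permutation_sym Hperm)). apply in_or_app; right.
        apply in_or_app; right. left; reflexivity. }
      destruct (in_split _ _ HA) as (m1&m2&Hm).
      destruct (Hdec m1 _ _ m2 Hm) as (ha&hr&Hd'&Hu'&Hpa&HGa&Hsr).
      destruct (heap_split3 _ _ _ _ _ _ _ Hd' Hu' Hd Hu) as (B1&B2&B3&B4).
      assert (Hev : map (eval lnil s) ([TVar (LV g1); TVar (DV g2); TVar (LV f); TVar (DV h)] ++ map TVar xi)
                    = [VL Dat (sl s g1); VD L (sd s g2); VL Dat lf; VD L dh] ++ vx).
      { simpl. rewrite map_eval_TVar, Hlf, Hdh, Hvx. reflexivity. }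
      rewrite Hev in HGa.
      specialize (HGa eq_refl _ _ _ _ _ eq_refl hx (hu L Dat ha hx) Hx B1 B2).
      eapply (psat_rule P' (mkRule (rpure r) (m1 ++ PredAt P' ([TVar (LV g1); TVar (DV g2)] ++ map TVar xi) :: m2)) (s := s)).
      + apply Hiff. right. exists (rpure r), m1, m2, g1, g2. split; [|reflexivity].
        destruct r as [pi sp]. simpl in Hm. subst sp. exact Hin.
      + rewrite HparP'. simpl. rewrite Hle, Hdc, Hvx. reflexivity.
      + exact Hpure.
      + simpl. eapply ssat_insert; [exact Hsr| | exact B3 | exact B4].
        simpl. rewrite map_eval_TVar, Hvx. exact HGa. }
  pose (G1d := fun q vals hp => q = P' ->
    forall le dc vx, vals = [VL Dat le; VD L dc] ++ vx ->
    psat lnil D P ([VL Dat le; VD L dc; VL Dat lnil; VD L d] ++ vx) hp).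
  assert (G1 : forall q vals hp, psat lnil D q vals hp -> G1d q vals hp).
  { apply (@psat_strong L Dat lnil D G1d).
    intros p vals hp r s Hin Hps Hpure Hss Hdec; unfold G1d in Hdec |- *; intros -> le dc vx Hvals.
    rewrite HparP', Hvals in Hps. simpl in Hps.
    injection Hps as Hle Hdc Hvx.
    set (s' := upd_l (upd_d s h d) f lnil).
    assert (Hs'par : map (eval_var s') (params (D P)) = [VL Dat le; VD L dc; VL Dat lnil; VD L d] ++ vx).
    { rewrite Hpar. unfold s'. simpl. rewrite map_ld_other by assumption.
      rewrite Nat.eqb_refl.
      destruct (Nat.eqb_spec e f); [congruence|].
      destruct (Nat.eqb_spec c h); [congruence|].
      destruct (Nat.eqb_spec h h); [|congruence]. rewrite Hle, Hdc, Hvx. reflexivity. }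
    apply Hiff in Hin. destruct Hin as [Hr | (pi&l1&l2&g1&g2&HinP&Hr)].
    - subst r. simpl in Hpure.
      pose proof (Forall_inv Hpure) as Ha1. pose proof (Forall_inv (Forall_inv_tail Hpure)) as Ha2.
      simpl in Ha1, Ha2. injection Ha1 as Ha1. injection Ha2 as Ha2.
      assert (Hemp : hempty hp) by (simpl in Hss; inversion Hss; assumption).
      eapply (psat_rule P (base_rule L Dat e c f h) (s := s')); [exact HbaseP | exact Hs'par | |].
      + simpl. unfold s'; simpl.
        destruct (Nat.eqb_spec e f); [congruence|].
        destruct (Nat.eqb_spec c h); [congruence|].
        destruct (Nat.eqb_spec h h); [|congruence].
        repeat constructor; simpl; repeat rewrite Nat.eqb_refl;
        repeat match goal with |- context [Nat.eqb ?a ?b] => destruct (Nat.eqb_spec a b) end; congruence.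
      + simpl. constructor. exact Hemp.
    - subst r. cbn [rpure rspat] in *.
      set (A := PredAt (Dat:=Dat) P ([TVar (LV g1); TVar (DV g2); TVar (LV f); TVar (DV h)] ++ map TVar xi)) in *.
      destruct (HP _ HinP) as [Hb | Hr].
      { unfold base_rule in Hb. injection Hb as _ Hb. destruct l1; discriminate. }
      destruct Hr as (S1&S2&g1'&g2'&Hperm&_&_&_&_&_&_&_&Hg1&Hg2&Hfpi&Hhpi&HfS&HhS).
      cbn [rpure rspat] in Hperm, Hfpi, Hhpi.
      assert (HAeq : A = PredAt P ([TVar (LV g1'); TVar (DV g2'); TVar (LV f); TVar (DV h)] ++ map TVar xi)).
      { assert (HA : In A (S1 ++ S2 ++ [PredAt P ([TVar (LV g1'); TVar (DV g2'); TVar (LV f); TVar (DV h)] ++ map TVar xi)])).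
        { apply (Permutation_in _ Hperm). apply in_or_app; right; left; reflexivity. }
        rewrite app_assoc in HA. apply in_app_or in HA. destruct HA as [HA|[HA|[]]]; [|auto].
        exfalso. apply HfS. apply in_flat_map. exists A. split; auto.
        unfold A, vars_satom. simpl. auto. }
      pose proof HAeq as HAeq'. unfold A in HAeq'. injection HAeq' as <- <-.
      rewrite <- HAeq, (app_assoc S1 S2 [A]) in Hperm.
      assert (Hp2 : Permutation (l1 ++ l2) (S1 ++ S2)) by (rewrite <- (app_nil_r (S1 ++ S2)); exact (Permutation_app_inv l1 l2 (S1 ++ S2) [] A Hperm)).
      assert (Hvl : forall x, In x (flat_map (@vars_satom Dat) (l1 ++ l2)) -> x <> LV f /\ x <> DV h).
      { intros x Hx. apply in_flat_map in Hx. destruct Hx as (a&Ha&Hxa).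
        assert (Ha' : In a (S1 ++ S2)) by (eapply Permutation_in; eauto).
        split; intros ->; [apply HfS|apply HhS]; apply in_flat_map; eauto. }
      destruct (Hdec l1 _ _ l2 eq_refl) as (ha&hr&Hd'&Hu'&Hpa&HGa&Hsr).
      assert (Hev : map (eval lnil s) ([TVar (LV g1); TVar (DV g2)] ++ map TVar xi)
                    = [VL Dat (sl s g1); VD L (sd s g2)] ++ vx).
      { simpl. rewrite map_eval_TVar, Hvx. reflexivity. }
      rewrite Hev in HGa. specialize (HGa eq_refl _ _ _ eq_refl).
      eapply (psat_rule P (mkRule pi (l1 ++ A :: l2)) (s := s')); [exact HinP | exact Hs'par | |].
      + simpl. apply (pure_agree _ _ lnil s); [|exact Hpure].
        intros x Hx. unfold s'. symmetry. apply upd_ld_other; intros ->; auto.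
      + simpl. eapply ssat_insert; [| |exact Hd'|exact Hu'].
        * apply (ssat_agree _ _ lnil D s); [exact Hsr|].
          intros x Hx. destruct (Hvl x Hx). unfold s'. symmetry. apply upd_ld_other; auto.
        * unfold A. simpl. rewrite map_eval_TVar.
          unfold s'. rewrite map_ld_other by assumption. simpl. rewrite Nat.eqb_refl.
          destruct (Nat.eqb_spec g1 f); [subst; exfalso; apply Hg1; simpl; auto|].
          destruct (Nat.eqb_spec g2 h); [subst; exfalso; apply Hg2; simpl; auto|].
          destruct (Nat.eqb_spec h h); [|congruence]. rewrite Hvx. exact HGa. }
  assert (Hemp0 : forall s0 : stack L Dat, psat lnil D P' ([VL Dat lnil; VD L d] ++ map (eval_var s0) xi) (fun _ => None)).
  { intros s0.
    eapply (psat_rule P' (mkRule [PEq (TVar (LV e)) TNil; PEq (TVar (DV c)) (TDat d)] []) (s := upd_l (upd_d s0 c d) e lnil)).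
    - apply Hiff. left. reflexivity.
    - rewrite HparP'. simpl. rewrite map_ld_other by assumption. rewrite !Nat.eqb_refl. reflexivity.
    - repeat constructor; simpl; repeat rewrite Nat.eqb_refl; reflexivity.
    - constructor. intro; reflexivity. }
  split; [split|].
  - intros s hh _ Hsat. simpl in Hsat |- *. rewrite map_eval_TVar in Hsat |- *.
    exact (G1 _ _ _ Hsat eq_refl (sl s e) (sd s c) (map (eval_var s) xi) eq_refl).
  - intros s hh _ Hsat. simpl in Hsat |- *. rewrite map_eval_TVar in Hsat |- *.
    apply (G3 _ _ _ Hsat eq_refl (sl s e) (sd s c) lnil d (map (eval_var s) xi) eq_refl (fun _ => None) hh (Hemp0 s)).
    + intro k; auto.
    + intro k. destruct (hh k); reflexivity.
  - intros s hh _ Hsat. simpl in Hsat |- *.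
    destruct Hsat as (l & dd & h1 & h2 & Hd & Hu & H1 & H2).
    rewrite map_eval_TVar in H1, H2 |- *.
    rewrite map_dl_other in H1, H2 by assumption.
    simpl in H1, H2. rewrite !Nat.eqb_refl in H1, H2.
    destruct (Nat.eqb_spec e f); [congruence|].
    destruct (Nat.eqb_spec c h); [congruence|].
    exact (G3 _ _ _ H1 eq_refl (sl s e) (sd s c) l dd (map (eval_var s) xi) eq_refl h2 hh H2 Hd Hu).
Qed.
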